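(* For every $n\geq1$, \[ \lvert eNNC_{2n}\rvert=\sum_{j=0}^{n}(-1)^j\binom{n}{j}\lvert NNC_{2n-j}\rvert. \]
   Context: For $m\geq0$, a non-exhaustive non-crossing partition of $[m]=\{1,\dots,m\}$ is a collection $\mathcal{P}$ of pairwise disjoint nonempty subsets (blocks) of $[m]$, not necessarily covering $[m]$ (the empty collection is allowed), such that whenever $1\leq i<k<j<l\leq m$ with $i,j$ in a block $B$ and $k,l$ in a block $B'$, then $B=B'$. $NNC_m$ denotes the set of these. $eNNC_{2n}\subseteq NNC_{2n}$ is the set of those partitions of $[2n]$ that contain no block of the form $\{i\}$ with $i$ even. *)

(* Defs.v *)
From mathcomp Require Import all_boot all_order all_algebra.
Set Implicit Arguments. Unset Strict Implicit. Unset Printing Implicit Defensive.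

(* Convention: the ground set [m] = {1,...,m} is represented by 'I_m,
   the element i : 'I_m standing for the integer i+1.  The order is the
   same, so non-crossingness is unaffected; the integer i+1 is even iff
   the ordinal i is odd. *)

(* A collection of blocks: pairwise disjoint nonempty subsets, not
   necessarily covering [m], non-crossing. *)
Definition is_NNC (m : nat) (P : {set {set 'I_m}}) : bool :=
  [&& set0 \notin P,
      [forall B in P, forall B' in P, (B != B') ==> [disjoint B & B']] &
      [forall B in P, forall B' in P,
        [forall i : 'I_m, forall k : 'I_m, forall j : 'I_m, forall l : 'I_m,
          ([&& i < k, k < j, j < l, i \in B, j \in B, k \in B' & l \in B'])
            ==> (B == B')]]].

Definition NNC (m : nat) : {set {set {set 'I_m}}} := [set P | is_NNC P].

(* eNNC_{2n}: no singleton block {i} with i even (in 1-based numbering),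
   i.e. with the 0-based ordinal odd. *)
Definition eNNC (n : nat) : {set {set {set 'I_(n.*2)}}} :=
  [set P in NNC n.*2 | [forall i : 'I_(n.*2), odd i ==> ([set i] \notin P)]].

(* Main.v *)
Require Import Defs.
From mathcomp Require Import all_boot all_order all_algebra.
Import GRing.Theory.
Local Open Scope ring_scope.
Set Implicit Arguments. Unset Strict Implicit. Unset Printing Implicit Defensive.
Local Close Scope ring_scope.
Lemma NNCP m (P : {set {set 'I_m}}) :
  reflect [/\ set0 \notin P,
     (forall B B', B \in P -> B' \in P -> B != B' -> [disjoint B & B']) &
     (forall B B' (i k j l : 'I_m), B \in P -> B' \in P ->
        i < k -> k < j -> j < l -> i \in B -> j \in B -> k \in B' -> l \in B' ->
        B = B')] (is_NNC P).
Proof.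
apply: (iffP and3P) => [[h0 /forall_inP h1 /forall_inP h2]|[h0 h1 h2]]; split => //.
- move=> B B' BP B'P; have /forall_inP := h1 B BP; move=> /(_ B' B'P) /implyP; exact.
- move=> B B' i k j l BP B'P ik kj jl iB jB kB lB.
  have /forall_inP := h2 B BP; move=> /(_ B' B'P).
  move=> /forallP /(_ i) /forallP /(_ k) /forallP /(_ j) /forallP /(_ l) /implyP.
  by rewrite ik kj jl iB jB kB lB => /(_ isT) /eqP.
- apply/forall_inP => B BP; apply/forall_inP => B' B'P; apply/implyP; exact: h1.
- apply/forall_inP => B BP; apply/forall_inP => B' B'P.
  apply/forallP => i; apply/forallP => k; apply/forallP => j; apply/forallP => l.
  apply/implyP => /and5P[ik kj jl iB /and3P[jB kB lB]].
  by apply/eqP; apply: (h2 B B' i k j l).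
Qed.

Definition hS m (S : {set 'I_m}) (x : 'I_m) : nat :=
  #|[set y : 'I_m | (y \notin S) && (y < x)]|.

Lemma hS_le m (S : {set 'I_m}) (x y : 'I_m) : x <= y -> hS S x <= hS S y.
Proof.
move=> xy; apply: subset_leq_card; apply/subsetP => z; rewrite !inE.
by case/andP => -> /= zx; apply: leq_trans zx xy.
Qed.

Lemma hS_mono m (S : {set 'I_m}) (x y : 'I_m) : x \notin S -> x < y -> hS S x < hS S y.
Proof.
move=> xS xy; apply: proper_card; apply/properP; split.
  apply/subsetP => z; rewrite !inE.
  by case/andP => -> /= zx; apply: ltn_trans zx xy.
by exists x; rewrite !inE ?ltnn ?andbF // xS xy.
Qed.

Lemma hS_ltE m (S : {set 'I_m}) (x y : 'I_m) : x \notin S -> y \notin S ->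
  (hS S x < hS S y) = (x < y).
Proof.
move=> xS yS; case: (ltnP x y) => xy; first exact: (hS_mono xS xy).
by apply/negbTE; rewrite -leqNgt; apply: (hS_le S xy).
Qed.

Lemma hS_inj m (S : {set 'I_m}) (x y : 'I_m) : x \notin S -> y \notin S ->
  hS S x = hS S y -> x = y.
Proof.
move=> xS yS e; apply/val_inj/eqP; rewrite eqn_leq.
rewrite (leqNgt x y) (leqNgt y x).
by rewrite -(hS_ltE xS yS) -(hS_ltE yS xS) e ltnn.
Qed.

Lemma hS_lt m (S : {set 'I_m}) k (x : 'I_m) : #|~: S| = k -> x \notin S -> hS S x < k.
Proof.
move=> <- xS; apply: proper_card; apply/properP; split.
  by apply/subsetP => z; rewrite !inE => /andP[].
by exists x; rewrite !inE ?ltnn ?andbF.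
Qed.

Lemma hS_surj m (S : {set 'I_m}) k (c : 'I_k) : #|~: S| = k ->
  exists2 x, x \notin S & hS S x = c.
Proof.
move=> hk.
pose f (x : 'I_m) : 'I_k := insubd c (hS S x).
have fv x : x \notin S -> val (f x) = hS S x.
  by move=> xS; rewrite /f val_insubd (hS_lt hk xS).
have : c \in f @: (~: S).
  have -> : f @: (~: S) = setT; last by rewrite inE.
  apply/eqP; rewrite eqEcard subsetT /= cardsT card_ord card_in_imset ?hk //.
  move=> x y; rewrite !inE => xS yS /(congr1 val); rewrite !fv //.
  exact: hS_inj.
case/imsetP => x; rewrite inE => xS ->; exists x => //.
by rewrite fv.
Qed.

Definition img m (S : {set 'I_m}) k (B : {set 'I_m}) : {set 'I_k} :=
  [set c : 'I_k | [exists x in B, hS S x == c]].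
Definition pre m (S : {set 'I_m}) k (C : {set 'I_k}) : {set 'I_m} :=
  [set x | (x \notin S) && [exists c in C, hS S x == c]].
Definition Phi m (S : {set 'I_m}) k (P : {set {set 'I_m}}) : {set {set 'I_k}} :=
  [set img S k B | B in P & [disjoint B & S]].
Definition Psi m (S : {set 'I_m}) k (Q : {set {set 'I_k}}) : {set {set 'I_m}} :=
  [set [set i] | i in S] :|: [set pre S C | C in Q].
Definition XS m (S : {set 'I_m}) := [set P in NNC m | [forall i in S, [set i] \in P]].

Lemma pre_disj m (S : {set 'I_m}) k (C : {set 'I_k}) : [disjoint pre S C & S].
Proof. apply/pred0P => x /=; rewrite /pre inE; apply/negbTE/negP => /andP[/andP[/negP h _] h']; exact: h h'. Qed.

Lemma pre_img m (S : {set 'I_m}) k (B : {set 'I_m}) : #|~: S| = k ->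
  [disjoint B & S] -> pre S (img S k B) = B.
Proof.
move=> hk dB; apply/setP => x; rewrite !inE; apply/andP/idP.
  case=> xS /exists_inP [c]; rewrite inE => /exists_inP [y yB /eqP hy] /eqP hx.
  have yS : y \notin S by rewrite (disjointFr dB yB).
  by rewrite -(hS_inj yS xS) // hy hx.
move=> xB; have xS : x \notin S by rewrite (disjointFr dB xB).
split => //; apply/exists_inP; exists (Ordinal (hS_lt hk xS)) => //.
by rewrite inE; apply/exists_inP; exists x.
Qed.

Lemma img_pre m (S : {set 'I_m}) k (C : {set 'I_k}) : #|~: S| = k ->
  img S k (pre S C) = C.
Proof.
move=> hk; apply/setP => c; rewrite !inE; apply/exists_inP/idP.
  case=> x; rewrite inE => /andP[xS /exists_inP [c' c'C /eqP h1]] /eqP h2.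
  by have -> : c = c' by apply: val_inj; rewrite /= -h1 -h2.
move=> cC; have [x xS hx] := hS_surj c hk; exists x; last by rewrite hx.
rewrite inE xS /=; apply/exists_inP; exists c => //.
by rewrite hx.
Qed.

Lemma pre_mem m (S : {set 'I_m}) k (C : {set 'I_k}) x :
  x \in pre S C -> x \notin S /\ exists2 c, c \in C & hS S x = c.
Proof. by rewrite inE => /andP[xS /exists_inP[c cC /eqP h]]; split => //; exists c. Qed.

Lemma img_mem m (S : {set 'I_m}) k (B : {set 'I_m}) c :
  c \in img S k B -> exists2 x, x \in B & hS S x = c.
Proof. by rewrite inE => /exists_inP[x xB /eqP h]; exists x. Qed.

Lemma NNC_inE m (P : {set {set 'I_m}}) : (P \in NNC m) = is_NNC P.
Proof. by rewrite inE. Qed.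

Lemma Phi_mem m (S : {set 'I_m}) k (P : {set {set 'I_m}}) (X : {set 'I_k}) :
  X \in Phi S k P -> exists B, [/\ B \in P, [disjoint B & S] & X = img S k B].
Proof. by case/imsetP => B; rewrite inE => /andP[BP dB] ->; exists B. Qed.

Lemma Phi_memI m (S : {set 'I_m}) k (P : {set {set 'I_m}}) (B : {set 'I_m}) :
  B \in P -> [disjoint B & S] -> img S k B \in Phi S k P.
Proof. by move=> BP dB; apply/imsetP; exists B => //; rewrite inE BP dB. Qed.

Lemma Psi_mem m (S : {set 'I_m}) k (Q : {set {set 'I_k}}) (B : {set 'I_m}) :
  B \in Psi S Q -> (exists2 i, i \in S & B = [set i]) \/ (exists2 C, C \in Q & B = pre S C).
Proof.
by case/setUP => /imsetP [x xA ->]; [left|right]; exists x.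
Qed.

Lemma Phi_NNC m (S : {set 'I_m}) k (P : {set {set 'I_m}}) : #|~: S| = k ->
  P \in NNC m -> Phi S k P \in NNC k.
Proof.
move=> hk; rewrite !NNC_inE => /NNCP [h0 h1 h2]; apply/NNCP; split.
- apply/negP => /Phi_mem [B [BP dB e]].
  have : B != set0 by apply: contraNneq h0 => <-.
  case/set0Pn => x xB; have xS : x \notin S by rewrite (disjointFr dB xB).
  have : Ordinal (hS_lt hk xS) \in img S k B by rewrite inE; apply/exists_inP; exists x.
  by rewrite -e inE.
- move=> X Y /Phi_mem [B [BP dB ->]] /Phi_mem [B' [B'P dB' ->]] ne.
  have nB : B != B' by apply: contraNneq ne => ->.
  have dBB := h1 B B' BP B'P nB.
  apply/pred0P => c /=; apply/negP => /andP[/img_mem [x xB hx] /img_mem [y yB hy]].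
  have xS : x \notin S by rewrite (disjointFr dB xB).
  have yS : y \notin S by rewrite (disjointFr dB' yB).
  have exy : x = y by apply: (hS_inj xS yS); rewrite hx hy.
  by move: (disjointFr dBB xB); rewrite exy yB.
- move=> X Y c1 c2 c3 c4 /Phi_mem [B [BP dB ->]] /Phi_mem [B' [B'P dB' ->]] l12 l23 l34.
  move=> /img_mem [x1 x1B h1x] /img_mem [x3 x3B h3x] /img_mem [x2 x2B h2x] /img_mem [x4 x4B h4x].
  have x1S : x1 \notin S by rewrite (disjointFr dB x1B).
  have x3S : x3 \notin S by rewrite (disjointFr dB x3B).
  have x2S : x2 \notin S by rewrite (disjointFr dB' x2B).
  have x4S : x4 \notin S by rewrite (disjointFr dB' x4B).
  have e : B = B'.
    apply: (h2 B B' x1 x2 x3 x4) => //.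
    + by rewrite -(hS_ltE x1S x2S) h1x h2x.
    + by rewrite -(hS_ltE x2S x3S) h2x h3x.
    + by rewrite -(hS_ltE x3S x4S) h3x h4x.
  by rewrite e.
Qed.

Lemma Psi_X m (S : {set 'I_m}) k (Q : {set {set 'I_k}}) : #|~: S| = k ->
  Q \in NNC k -> Psi S Q \in XS S.
Proof.
move=> hk; rewrite NNC_inE => /NNCP [h0 h1 h2].
rewrite inE NNC_inE; apply/andP; split; last first.
  by apply/forall_inP => i iS; apply/setUP; left; apply/imsetP; exists i.
apply/NNCP; split.
- apply/negP => /Psi_mem [[i iS e]|[C CQ e]].
    by have := set11 i; rewrite -e inE.
  have : C != set0 by apply: contraNneq h0 => <-.
  case/set0Pn => c cC; have [x xS hx] := hS_surj c hk.
  have : x \in pre S C by rewrite inE xS; apply/exists_inP; exists c => //; rewrite hx.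
  by rewrite -e inE.
- move=> B B' /Psi_mem [[i iS ->]|[C CQ ->]] /Psi_mem [[j jS ->]|[C' C'Q ->]] ne.
  + rewrite disjoints1 inE; apply: contra ne => /eqP ->; by [].
  + by rewrite disjoints1 (disjointFl (pre_disj S C') iS).
  + by rewrite disjoint_sym disjoints1 (disjointFl (pre_disj S C) jS).
  + have nC : C != C' by apply: contraNneq ne => ->.
    have dCC := h1 C C' CQ C'Q nC.
    apply/pred0P => x /=; apply/negP => /andP[/pre_mem [xS [c cC hc]] /pre_mem [_ [c' c'C hc']]].
    have ecc : c = c' by apply: val_inj; rewrite /= -hc -hc'.
    by move: (disjointFr dCC cC); rewrite ecc c'C.
- move=> B B' i k' j l /Psi_mem [[s sS ->]|[C CQ ->]] /Psi_mem [[s' sS' ->]|[C' C'Q ->]] ik kj jl;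
    [rewrite !inE ..|].
  + by move=> /eqP ei /eqP ej; move: (ltn_trans ik kj); rewrite ei ej ltnn.
  + by move=> /eqP ei /eqP ej; move: (ltn_trans ik kj); rewrite ei ej ltnn.
  + by move=> _ _ /eqP ek /eqP el; move: (ltn_trans kj jl); rewrite ek el ltnn.
  + move=> /pre_mem [iS [ci ciC hi]] /pre_mem [jS [cj cjC hj]].
    move=> /pre_mem [kS [ck ckC hk']] /pre_mem [lS [cl clC hl]].
    have -> // : C = C'.
    apply: (h2 C C' ci ck cj cl) => //.
    + by rewrite -hi -hk' (hS_ltE iS kS).
    + by rewrite -hj -hk' (hS_ltE kS jS).
    + by rewrite -hj -hl (hS_ltE jS lS).
Qed.

Lemma Phi_Psi m (S : {set 'I_m}) k (Q : {set {set 'I_k}}) : #|~: S| = k ->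
  Phi S k (Psi S Q) = Q.
Proof.
move=> hk; apply/setP => X; apply/idP/idP.
  case/Phi_mem => B [/Psi_mem [[i iS ->]|[C CQ ->]] dB ->].
    by move: dB; rewrite disjoints1 iS.
  by rewrite img_pre.
move=> XQ; rewrite -(@img_pre _ S _ X hk); apply: Phi_memI; last exact: pre_disj.
by apply/setUP; right; apply/imsetP; exists X.
Qed.

Lemma Psi_Phi m (S : {set 'I_m}) k (P : {set {set 'I_m}}) : #|~: S| = k ->
  P \in XS S -> Psi S (Phi S k P) = P.
Proof.
move=> hk; rewrite inE NNC_inE => /andP[/NNCP [h0 h1 h2] /forall_inP hS1].
apply/setP => B; apply/idP/idP.
  case/Psi_mem => [[i iS ->]|[C /Phi_mem [B0 [B0P dB0 ->]] ->]]; first exact: hS1.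
  by rewrite pre_img.
move=> BP; case: (boolP [disjoint B & S]) => dB.
  apply/setUP; right; apply/imsetP; exists (img S k B); first exact: Phi_memI.
  by rewrite pre_img.
case/pred0Pn: dB => i /andP[iB iS].
have iP := hS1 i iS.
have -> : B = [set i].
  apply/eqP; apply/negPn/negP => ne.
  by move: (disjointFr (h1 _ _ BP iP ne) iB); rewrite set11.
by apply/setUP; left; apply/imsetP; exists i.
Qed.

Lemma card_XS m (S : {set 'I_m}) k : #|~: S| = k -> #|XS S| = #|NNC k|.
Proof.
move=> hk.
have inj : {in NNC k &, injective (@Psi m S k)}.
  by move=> Q1 Q2 _ _ e; rewrite -(Phi_Psi Q1 hk) e Phi_Psi.
have im : (@Psi m S k) @: NNC k = XS S.
  apply/setP => P; apply/imsetP/idP => [[Q QN ->]|PX]; first exact: Psi_X.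
  exists (Phi S k P); last by rewrite Psi_Phi.
  by apply: Phi_NNC => //; move: PX; rewrite inE => /andP[].
by rewrite -im card_in_imset.
Qed.
Local Open Scope ring_scope.
Lemma sum_by_card (T : finType) (E : {set T}) (F : nat -> int) :
  \sum_(S : {set T} | S \subset E) F #|S| =
  \sum_(j < #|E|.+1) F j *+ 'C(#|E|, j).
Proof.
transitivity (\sum_(S : {set T} | S \subset E) \sum_(j < #|E|.+1) (if #|S| == j then F j else 0)).
  apply: eq_bigr => S SE.
  have hS : (#|S| < #|E|.+1)%N by rewrite ltnS subset_leq_card.
  rewrite (bigD1 (Ordinal hS)) //= eqxx big1 ?addr0 // => j /negbTE.
  by rewrite eq_sym -val_eqE /= => ->.
rewrite exchange_big; apply: eq_bigr => j _.
rewrite -big_mkcondr /=.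
rewrite sumr_const -cards_draws; congr (_ *+ _).
by apply: eq_card => S; rewrite inE.
Qed.

Lemma alt_sum (T : finType) (E : {set T}) :
  \sum_(S : {set T} | S \subset E) (-1) ^+ #|S| = (E == set0)%:R :> int.
Proof.
rewrite sum_by_card.
have h := exprDn 1 (-1 : int) #|E|; rewrite subrr expr0n in h.
rewrite -cards_eq0 h; apply: eq_bigr => j _; by rewrite expr1n mul1r.
Qed.

Lemma card_sum (U : finType) (Y : {set U}) :
  #|Y|%:Z = \sum_(x in Y) 1.
Proof. by rewrite sumr_const -natz. Qed.

Lemma incl_excl (U : finType) (X : {set U}) (T : finType) (E : {set T})
    (A : T -> U -> bool) :
  #|[set x in X | [forall i in E, ~~ A i x]]|%:Z =
  \sum_(S : {set T} | S \subset E)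
     (-1) ^+ #|S| * #|[set x in X | [forall i in S, A i x]]|%:Z.
Proof.
under eq_bigr => S _ do rewrite card_sum big_mkcond mulr_sumr.
rewrite exchange_big card_sum big_mkcond /=.
apply: eq_bigr => x _.
rewrite !inE.
case: (boolP (x \in X)) => xX /=; last first.
  by rewrite big1 // => S _; rewrite inE (negbTE xX) /= mulr0.
transitivity (\sum_(S : {set T} | S \subset E :&: [set i | A i x]) (-1) ^+ #|S| : int).
  rewrite alt_sum.
  case: (boolP [forall i in E, ~~ A i x]) => [/forall_inP h|/forall_inP h].
    suff -> : (E :&: [set i | A i x] == set0) by [].
    apply/eqP/setP => i; rewrite !inE.
    by apply/negP => /andP[/h /negP].
  suff -> : (E :&: [set i | A i x] == set0) = false by [].
  apply/negbTE; apply/set0Pn.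
  case: (pickP [pred i | (i \in E) && A i x]) => [i /andP[iE iA]|none].
    by exists i; rewrite !inE iE.
  by case: h => i iE; apply/negP => iA; have := none i; rewrite /= iE iA.
rewrite big_mkcond [RHS]big_mkcond /=; apply: eq_bigr => S _.
rewrite subsetI; case: (S \subset E) => //=.
rewrite inE xX /=.
case: (boolP [forall i in S, A i x]) => [/forall_inP h|/forall_inP h].
  rewrite mulr1 ifT //; apply/subsetP => i /h; by rewrite inE.
rewrite mulr0 ifF //; apply/negP => /subsetP hs; apply: h => i /hs; by rewrite inE.
Qed.
Lemma card_odd k : #|[set i : 'I_(k.*2) | odd i]| = k.
Proof.
rewrite -sum1_card big_mkcond /=.
under eq_bigr => i _ do rewrite inE.
rewrite -(big_mkord xpredT (fun i => if odd i then 1%N else 0%N)).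
elim: k => [|k IH]; first by rewrite big_geq.
rewrite doubleS !big_nat_recr //= IH odd_double /=.
by rewrite addn0 addn1.
Qed.
Unset Implicit Arguments.

Theorem lemma4p11 (n : nat) (hn : (1 <= n)%N) :
  (#|eNNC n|%:Z : int) =
  \sum_(j < n.+1) ((-1) ^+ j * ('C(n, j))%:Z * (#|NNC (n.*2 - j)|)%:Z).
Proof.
pose E := [set i : 'I_(n.*2) | odd i].
have E1 : eNNC n = [set P in NNC n.*2 | [forall i in E, ~~ ([set i] \in P)]].
  apply/setP => P; rewrite !inE; congr (_ && _); apply/forallP/forall_inP => h i.
    by rewrite inE => oi; exact: (implyP (h i) oi).
  by apply/implyP => oi; apply: h; rewrite inE.
rewrite E1 (incl_excl (NNC n.*2) E (fun i P => [set i] \in P)).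
transitivity (\sum_(S : {set 'I_(n.*2)} | S \subset E)
                 ((-1) ^+ #|S| * (#|NNC (n.*2 - #|S|)|)%:Z)).
  apply: eq_bigr => S _; congr (_ * _%:Z).
  have hc : #|~: S| = (n.*2 - #|S|)%N.
    have := cardsC S; rewrite card_ord; move: #|S| #|~: S| => a b <-; by rewrite addKn.
  exact: (card_XS hc).
have := sum_by_card E (fun j => (-1) ^+ j * (#|NNC (n.*2 - j)|)%:Z).
move=> /= ->; rewrite card_odd.
apply: eq_bigr => j _.
by rewrite -mulr_natr natz mulrAC.
Qed.
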